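(* Let $X$ be a fibrewise space over $B$ such that $X$ is fibrewise Hausdorff and $X\times_BX$ is perfectly normal. Then $X$ is fibrewise locally equiconnected if and only if $X$ is fibrewise uniformly locally contractible.
   Context: A fibrewise space over $B$ is a space $X$ with $p_X:X\to B$; fibrewise homotopies $G:W\times I\to X$ satisfy $p_X(G(w,t))=p_W(w)$. $X\times_BX=\{(x,y):p_X(x)=p_X(y)\}$ and $\Delta_X(x)=(x,x)$. $X$ is fibrewise Hausdorff if $\Delta_X(X)$ is closed in $X\times_BX$. A fibrewise cofibration is a fibrewise map with the homotopy extension property with respect to fibrewise maps and fibrewise homotopies; closed if also a closed embedding. $X$ is fibrewise locally equiconnected if $\Delta_X$ is a closed fibrewise cofibration. $X$ is fibrewise uniformly locally contractible if there are an open neighbourhood $W$ of $\Delta_X(X)$ in $X\times_BX$ and a fibrewise homotopy $G:W\times I\to X$ with $G(x,y,0)=x$, $G(x,y,1)=y$ for $(x,y)\in W$ and $G(x,x,t)=x$ for all $x\in X,t\in I$. *)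

(* Defs.v *)
From HB Require Import structures.
From mathcomp Require Import all_boot all_order all_algebra.
From mathcomp Require Import all_classical all_reals.
From mathcomp Require Import all_analysis borel_hierarchy.
Set Implicit Arguments. Unset Strict Implicit. Unset Printing Implicit Defensive.
Import Order.TTheory GRing.Theory Num.Theory.
Import numFieldNormedType.Exports.
Local Open Scope classical_set_scope.
Local Open Scope ring_scope.

Definition unitI (R : realType) : set R := [set t | 0 <= t <= 1].
Arguments unitI R : clear implicits.

(* A fibrewise space over B: a topological space X with a continuous
   projection p : X -> B (the hypothesis "continuous p" is added in the
   theorem).  Fibrewise product X x_B X, with the subspace topology of
   X * X (MathComp-Analysis' [set_type] carries the genuine subspace
   (initial) topology). *)
Definition fibprod_set {B X : topologicalType} (p : X -> B) : set (X * X) :=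
  [set z | p z.1 = p z.2].

Definition fibprod {B X : topologicalType} (p : X -> B) : topologicalType :=
  set_type (fibprod_set p).

Definition fibprod_proj {B X : topologicalType} (p : X -> B)
  (z : fibprod p) : B := p (sval z).1.
Arguments fibprod_proj {B X} p z.

Definition fdiag {B X : topologicalType} (p : X -> B) (x : X) : fibprod p :=
  exist _ (x, x) (mem_set (erefl (p x))).

Definition fw_hausdorff {B X : topologicalType} (p : X -> B) : Prop :=
  closed (range (fdiag p)).

Definition perfectly_normal (T : topologicalType) : Prop :=
  normal_space T /\ (forall C : set T, closed C -> Gdelta C).

Definition closed_embedding {A Y : topologicalType} (u : A -> Y) : Prop :=
  [/\ continuous u, closed (range u) &
      exists g : Y -> A, {within range u, continuous g} /\ cancel u g].

(* Homotopies W x I -> E are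
   represented as curried maps W -> R -> E continuous on W x [0,1]. *)
Definition fw_cofibration (R : realType) {B A Y : topologicalType}
  (pA : A -> B) (pY : Y -> B) (u : A -> Y) : Prop :=
  [/\ continuous u, (forall a, pY (u a) = pA a) &
  forall (E : topologicalType) (pE : E -> B), continuous pE ->
  forall (f : Y -> E) (h : A -> R -> E),
    continuous f -> (forall y, pE (f y) = pY y) ->
    {within [set: A] `*` unitI R, continuous (fun z : A * R => h z.1 z.2)} ->
    (forall a t, unitI R t -> pE (h a t) = pA a) ->
    (forall a, h a 0 = f (u a)) ->
    exists H : Y -> R -> E,
      [/\ {within [set: Y] `*` unitI R, continuous (fun z : Y * R => H z.1 z.2)},
          (forall y t, unitI R t -> pE (H y t) = pY y),
          (forall y, H y 0 = f y) &
          (forall a t, unitI R t -> H (u a) t = h a t)]].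

Definition closed_fw_cofibration (R : realType) {B A Y : topologicalType}
  (pA : A -> B) (pY : Y -> B) (u : A -> Y) : Prop :=
  fw_cofibration R pA pY u /\ closed_embedding u.

Definition fw_LEC (R : realType) {B X : topologicalType} (p : X -> B) : Prop :=
  closed_fw_cofibration R p (fibprod_proj p) (fdiag p).

Definition fw_ULC (R : realType) {B X : topologicalType} (p : X -> B) : Prop :=
  exists W : set (fibprod p),
    [/\ open W, range (fdiag p) `<=` W &
    exists G : fibprod p -> R -> X,
      [/\ {within W `*` unitI R, continuous (fun z : fibprod p * R => G z.1 z.2)},
          (forall w t, W w -> unitI R t -> p (G w t) = fibprod_proj p w),
          (forall w, W w -> G w 0 = (sval w).1 /\ G w 1 = (sval w).2) &
          (forall x t, unitI R t -> G (fdiag p x) t = x)]].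

(* Main.v *)
Require Import Defs.
From HB Require Import structures.
From mathcomp Require Import all_boot all_order all_algebra.
From mathcomp Require Import all_classical all_reals.
From mathcomp Require Import all_analysis borel_hierarchy.
From mathcomp Require Import lra ring.
Set Implicit Arguments. Unset Strict Implicit. Unset Printing Implicit Defensive.
Import Order.TTheory GRing.Theory Num.Theory.
Import numFieldNormedType.Exports.
Local Open Scope classical_set_scope.
Local Open Scope ring_scope.
Lemma sval_cont {T : topologicalType} (A : set T) : continuous (fun z : A => sval z).
Proof.
have := @initial_continuous A T set_val; rewrite set_valE; exact.
Qed.

Lemma cont_into_sub {T U : topologicalType} (A : set U) (k : T -> A) :
  continuous (fun x => sval (k x)) -> continuous k.
Proof.
move=> h; apply: (@continuous_comp_initial A T U set_val).
by rewrite set_valE.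
Qed.

Section S.
Context (B X : topologicalType) (p : X -> B).
Lemma fib_eq (z : fibprod p) : p (sval z).1 = p (sval z).2.
Proof. exact: (set_mem (svalP z)). Qed.
Lemma fdiag_cont : continuous (fdiag p).
Proof.
apply: cont_into_sub => /= x; apply: cvg_pair; exact: cvg_id.
Qed.
End S.
Section Clamp.
Context {R : realType}.
Definition clamp (t : R) : R := Num.max 0 (Num.min 1 t).
Lemma clamp_in t : unitI R (clamp t).
Proof.
rewrite /unitI /clamp /=; apply/andP; split; first by rewrite le_max lexx.
by rewrite ge_max ler01 ge_min lexx.
Qed.
Lemma clamp_id t : unitI R t -> clamp t = t.
Proof.
by move=> /andP[t0 t1]; rewrite /clamp (min_idPr t1) (max_idPr t0).
Qed.
Lemma clamp_cont : continuous clamp.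
Proof.
move=> x; apply: (@continuous_max R R (fun=> 0) (fun t => Num.min 1 t)).
  exact: cvg_cst.
apply: (@continuous_min R R (fun=> 1) id); [exact: cvg_cst | exact: cvg_id].
Qed.
End Clamp.
Lemma cvg_within_comp {T : Type} {U V : topologicalType} (F : set_system T)
  {FF : Filter F} (A : set U) (k : T -> U) (g : U -> V) (u0 : U) :
  k @ F --> u0 -> (\forall x \near F, A (k x)) ->
  g @ within A (nbhs u0) --> g u0 -> (g \o k) @ F --> g u0.
Proof.
move=> kF AF gA N /gA; rewrite /within /= nbhs_simpl => /kF /= h.
rewrite nbhs_simpl; apply: filterS2 AF h => x Ax; exact.
Qed.

Lemma cvg_paste {T : Type} {V : topologicalType} (F : set_system T) {FF : Filter F}
  (P : set T) (f g1 g2 : T -> V) (l : V) :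
  (forall x, P x -> f x = g1 x) -> (forall x, ~ P x -> f x = g2 x) ->
  g1 @ within P F --> l -> g2 @ within (~` P) F --> l -> f @ F --> l.
Proof.
move=> e1 e2 c1 c2 N Nl; have h1 := c1 N Nl; have h2 := c2 N Nl.
have {}h1 : \forall x \near F, P x -> N (g1 x) := h1.
have {}h2 : \forall x \near F, ~ P x -> N (g2 x) := h2.
apply: filterS2 h1 h2 => x h1 h2.
rewrite /=; by case: (pselect (P x)) => Px; [rewrite e1 //; exact: h1 | rewrite e2 //; exact: h2].
Qed.

Lemma cvg_within_empty {T : Type} {V : topologicalType} (F : set_system T)
  {FF : Filter F} (P : set T) (g : T -> V) (l : V) :
  (\forall x \near F, ~ P x) -> g @ within P F --> l.
Proof.
move=> nP N _; suff : \forall x \near F, P x -> N (g x) by [].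
apply: filterS nP => x nPx Px.
by exfalso; apply: nPx.
Qed.

Lemma within_withinW {T : Type} (F : set_system T) {FF : Filter F}
  (A P Q : set T) : (forall x, A x -> P x -> Q x) -> within P (within A F) Q.
Proof. by move=> h; suff : \forall x \near F, A x -> P x -> Q x by []; apply: nearW => x; exact: h. Qed.

Lemma fst_cont {T U : topologicalType} : continuous (@fst T U).
Proof. by move=> x; exact: cvg_fst. Qed.
Lemma snd_cont {T U : topologicalType} : continuous (@snd T U).
Proof. by move=> x; exact: cvg_snd. Qed.
Lemma ccomp {T U V : topologicalType} (f : T -> U) (g : U -> V) :
  continuous f -> continuous g -> continuous (g \o f).
Proof. by move=> cf cg x; apply: continuous_comp; [exact: cf | exact: cg]. Qed.
Lemma cpair {T U V : topologicalType} (f : T -> U) (g : T -> V) :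
  continuous f -> continuous g -> continuous (fun x => (f x, g x)).
Proof. by move=> cf cg x; apply: cvg_pair; [exact: cf | exact: cg]. Qed.
Lemma cont_pair_cst {T U : topologicalType} (c : U) : continuous (fun x : T => (x, c)).
Proof. exact (cpair (fun x => @cvg_id _ (nbhs x)) (fun x => cvg_cst c)). Qed.
Lemma cvg_comp_cont {T : Type} {U V : topologicalType} (F : set_system T)
  (f : T -> U) (g : U -> V) (l : U) :
  f @ F --> l -> continuous g -> (fun x => g (f x)) @ F --> g l.
Proof. move=> fl cg; apply: cvg_comp; [exact: fl | exact: cg]. Qed.
Lemma cvg_within2 {T : Type} (F : set_system T) {FF : Filter F} (A P : set T) :
  within P (within A F) --> F.
Proof. exact: cvg_trans (cvg_within _) (cvg_within _). Qed.
Lemma cont_mul_l {R : realType} (b : R) : continuous (fun t : R => b * t).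
Proof. move=> t; apply: cvgM; [exact: cvg_cst | exact: cvg_id]. Qed.
Lemma cont_affine {R : realType} (a b : R) : continuous (fun t : R => a - b * t).
Proof. move=> t; apply: cvgB; [exact: cvg_cst | exact: cont_mul_l]. Qed.
Lemma cont_snd_mul {T : topologicalType} {R : realType} (b : R) :
  continuous (fun x : T * R => (x.1, b * x.2)).
Proof. exact (cpair fst_cont (ccomp snd_cont (@cont_mul_l R b))). Qed.
Lemma cont_snd_affine {T : topologicalType} {R : realType} (a b : R) :
  continuous (fun x : T * R => (x.1, a - b * x.2)).
Proof. exact (cpair fst_cont (ccomp snd_cont (@cont_affine R a b))). Qed.
Section RealCont.
Context {T : topologicalType} {R : realType}.
Lemma contD (f g : T -> R) : continuous f -> continuous g -> continuous (fun x => f x + g x).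
Proof. by move=> cf cg x; apply: cvgD; [exact: cf | exact: cg]. Qed.
Lemma contB (f g : T -> R) : continuous f -> continuous g -> continuous (fun x => f x - g x).
Proof. by move=> cf cg x; apply: cvgB; [exact: cf | exact: cg]. Qed.
Lemma contM (f g : T -> R) : continuous f -> continuous g -> continuous (fun x => f x * g x).
Proof. by move=> cf cg x; apply: cvgM; [exact: cf | exact: cg]. Qed.
Lemma contC (c : R) : continuous (fun _ : T => c).
Proof. by move=> x; exact: cvg_cst. Qed.
Lemma contMin (f g : T -> R) : continuous f -> continuous g -> continuous (fun x => Num.min (f x) (g x)).
Proof. by move=> cf cg x; apply: (@continuous_min R T f g); [exact: cf | exact: cg]. Qed.
End RealCont.
Lemma cvg_pair_pt {T : Type} {U V : topologicalType} (F : set_system T) {FF : Filter F}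
  (f : T -> U) (g : T -> V) (a : U) (b : V) :
  f @ F --> a -> g @ F --> b -> (fun x => (f x, g x)) @ F --> (a, b).
Proof. by move=> fa gb; apply: cvg_pair; [exact: fa | exact: gb]. Qed.
Lemma unitI_mul {R : realType} (a b : R) : unitI R a -> unitI R b -> unitI R (a * b).
Proof.
move=> /andP[a0 a1] /andP[b0 b1]; apply/andP; split; first exact: mulr_ge0.
exact: mulr_ile1.
Qed.

Section Dir1.
Context (R : realType) (B X : topologicalType) (p : X -> B) (pcont : continuous p).
Local Notation Y := (fibprod p).

Definition Sset : set (Y * R)%type :=
  [set e | e.2 = 0 \/ (range (fdiag p) e.1 /\ unitI R e.2)].

Lemma fE_mem (y : Y) : (y, 0) \in Sset.
Proof. by apply: mem_set; left. Qed.
Lemma hE_mem (x : X) (t : R) : (fdiag p x, clamp t) \in Sset.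
Proof. by apply: mem_set; right; split; [exists x | exact: clamp_in]. Qed.

Definition fE (y : Y) : Sset := exist _ (y, 0) (fE_mem y).
Definition hE (x : X) (t : R) : Sset := exist _ (fdiag p x, clamp t) (hE_mem x t).
Definition pE (e : Sset) : B := fibprod_proj p (sval e).1.

Lemma pE_cont : continuous pE.
Proof.
exact (ccomp (ccomp (ccomp (ccomp (@sval_cont _ Sset) fst_cont) (@sval_cont _ (fibprod_set p))) fst_cont) pcont).
Qed.


Lemma fE_cont : continuous fE.
Proof. apply: cont_into_sub => /=; exact: (cpair (fun x => @cvg_id _ (nbhs x)) (fun x => cvg_cst 0)). Qed.

Lemma hE_cont : {within [set: X] `*` unitI R, continuous (fun z : X * R => hE z.1 z.2)}.
Proof.
apply: continuous_subspaceT; apply: cont_into_sub => /=.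
exact (cpair (ccomp fst_cont (@fdiag_cont _ _ p)) (ccomp snd_cont clamp_cont)).
Qed.

Lemma hE0 (x : X) : hE x 0 = fE (fdiag p x).
Proof. by apply: val_inj => /=; rewrite clamp_id //; rewrite /unitI /= lexx ler01. Qed.

Lemma LEC_ULC : fw_LEC R p -> fw_ULC R p.
Proof.
move=> [[_ _ HEP] _].
have [H [Hc Hfib H0 HD]] := HEP Sset pE pE_cont fE hE fE_cont (fun y => erefl)
  hE_cont (fun a t _ => erefl) hE0.
move/subspace_continuousP: (Hc) => Hc'.
have Hone : continuous (fun z : Y => H z 1).
  move=> z; apply: (@cvg_within_comp _ _ _ (nbhs z) _ ([set: Y] `*` unitI R)
     (fun z => (z, 1)) (fun x => H x.1 x.2) (z, 1)).
  - exact: cont_pair_cst.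
  - by apply: nearW => y; split => //; rewrite /unitI /= lexx ler01.
  - by apply: Hc'; split => //; rewrite /unitI /= lexx ler01.
have inD : forall w, 0 < (sval (H w 1)).2 ->
    (sval (sval (H w 1)).1).1 = (sval (sval (H w 1)).1).2.
  move=> w lp; case: (set_valP (H w 1)) => [e0|[[x _ ex] _]].
    by move: lp; rewrite e0 ltxx.
  by rewrite -ex.
have I1 : unitI R 1 by rewrite /unitI /= lexx ler01.
have I0 : unitI R 0 by rewrite /unitI /= lexx ler01.
exists ((fun z => (sval (H z 1)).2) @^-1` [set x | 0 < x]); split.
- apply: (continuousP _).1; last exact: open_gt.
  exact: (ccomp (ccomp Hone (@sval_cont _ Sset)) snd_cont).
- move=> _ [x _ <-] /=; rewrite HD //= clamp_id //; exact: ltr01.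
exists (fun w t => if t <= 2^-1 then (sval (sval (H w (2*t))).1).1
                   else (sval (sval (H w (2 - 2*t))).1).2); split.
- set a' := fun x : Y * R => sval (sval (H x.1 x.2)).1.
  have ac : forall u : Y * R, unitI R u.2 ->
      a' @ within ([set: Y] `*` unitI R) (nbhs u) --> a' u.
    move=> u Iu; apply: (@cvg_comp_cont _ _ _ _ (fun x => H x.1 x.2)
      (fun e : Sset => sval (sval e).1)).
      exact: Hc'.
    exact: (ccomp (ccomp (@sval_cont _ Sset) fst_cont) (@sval_cont _ (fibprod_set p))).
  apply/subspace_continuousP => -[z0 t0] [/= Wz0 /andP[t00 t01]].
  set WI := _ `*` _.
  set F := within WI (nbhs (z0, t0)).
  have FF : Filter F by exact: within_filter.
  have FF' : Filter (nbhs F) := FF.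
  set P := [set x : Y * R | x.2 <= 2^-1].
  set g1 := fun x : Y * R => (a' (x.1, 2 * x.2)).1.
  set g2 := fun x : Y * R => (a' (x.1, 2 - 2 * x.2)).2.
  have sF : snd @ F --> t0.
    apply: cvg_trans (cvg_app snd (cvg_within _)) _.
    exact: cvg_snd.
  have C1 : t0 <= 2^-1 -> g1 @ within P F --> g1 (z0, t0).
    move=> tle; apply: (@cvg_within_comp _ _ _ _ _ ([set: Y] `*` unitI R)
        (fun x => (x.1, 2 * x.2)) (fun x => (a' x).1) (z0, 2 * t0)).
    - apply: cvg_trans (cvg_app _ (@cvg_within2 _ (nbhs (z0, t0)) _ WI P)) _.
      exact (@cont_snd_mul Y R 2 (z0, t0)).
    - apply: within_withinW => -[z t] [_ /= /andP[u0 u1]] Pt; split => //.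
      move: Pt; rewrite /P /unitI /= => Pt; apply/andP; split; lra.
    - apply: (@cvg_comp_cont _ _ _ _ a' fst); last exact: fst_cont.
      by apply: ac; rewrite /unitI /=; apply/andP; split; lra.
  have C2 : 2^-1 <= t0 -> g2 @ within (~` P) F --> g2 (z0, t0).
    move=> tle; apply: (@cvg_within_comp _ _ _ _ _ ([set: Y] `*` unitI R)
        (fun x => (x.1, 2 - 2 * x.2)) (fun x => (a' x).2) (z0, 2 - 2 * t0)).
    - apply: cvg_trans (cvg_app _ (@cvg_within2 _ (nbhs (z0, t0)) _ WI (~` P))) _.
      exact (@cont_snd_affine Y R 2 2 (z0, t0)).
    - apply: within_withinW => -[z t] [_ /= /andP[u0 u1]] /negP; rewrite /P /= -ltNge => Pt; split => //.
      by rewrite /unitI /=; apply/andP; split; lra.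
    - apply: (@cvg_comp_cont _ _ _ _ a' snd); last exact: snd_cont.
      by apply: ac; rewrite /unitI /=; apply/andP; split; lra.
  have E1 : 2^-1 < t0 -> forall l : X, g1 @ within P F --> l.
    move=> tgt l; apply: (@cvg_within_empty _ _ F FF); have := cvgr_gt _ sF _ tgt.
    by move=> /(_ FF) h; apply: (@filterS _ F FF _ _ _ h) => x /= xl; rewrite /P /= leNgt xl.
  have E2 : t0 < 2^-1 -> forall l : X, g2 @ within (~` P) F --> l.
    move=> tlt l; apply: (@cvg_within_empty _ _ F FF); have := cvgr_lt _ sF _ tlt.
    by move=> /(_ FF) h; apply: (@filterS _ F FF _ _ _ h) => x /= xl; rewrite /P /= => /(_ (ltW xl)).
  have e1 : forall x, P x -> (fun z : Y * R => if z.2 <= 2^-1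
      then (sval (sval (H z.1 (2 * z.2))).1).1
      else (sval (sval (H z.1 (2 - 2 * z.2))).1).2) x = g1 x.
    by move=> x Px; rewrite /= ifT.
  have e2 : forall x, ~ P x -> (fun z : Y * R => if z.2 <= 2^-1
      then (sval (sval (H z.1 (2 * z.2))).1).1
      else (sval (sval (H z.1 (2 - 2 * z.2))).1).2) x = g2 x.
    by move=> x /negP/negbTE Px; rewrite /= ifF.
  rewrite /from_subspace /=.
  have [tlt|tgt|teq] := ltgtP t0 2^-1.
  - exact: (@cvg_paste _ _ F FF P _ g1 g2 _ e1 e2 (C1 (ltW tlt)) (E2 tlt _)).
  - exact: (@cvg_paste _ _ F FF P _ g1 g2 _ e1 e2 (E1 tgt _) (C2 (ltW tgt))).
  - have e : g2 (z0, t0) = g1 (z0, t0).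
      rewrite /g1 /g2 /a' /= teq.
      have -> : 2 - 2 * 2^-1 = 1 :> R by field.
      have -> : 2 * 2^-1 = 1 :> R by field.
      exact: (esym (inD z0 Wz0)).
    apply: (@cvg_paste _ _ F FF P _ g1 g2 _ e1 e2 (C1 _)); first by rewrite teq.
    by rewrite -e; apply: C2; rewrite teq.
- move=> w t _ /andP[t0 t1]; case: ifP => tle.
    have := Hfib w (2*t); rewrite /pE /fibprod_proj /= => ->//.
    by rewrite /unitI /=; apply/andP; split; lra.
  rewrite -fib_eq; have := Hfib w (2 - 2*t); rewrite /pE /fibprod_proj /= => ->//.
  by rewrite /unitI /=; apply/andP; split; move/negbT: tle; rewrite -ltNge => ?; lra.
- move=> w _; split.
    by rewrite ifT ?mulr0 ?H0 //; rewrite invr_ge0 ler0n.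
  rewrite ifF; last by apply/negbTE; rewrite -ltNge invf_lt1 // ?ltr1n // ltr0n.
  by rewrite mulr1 subrr H0.
- move=> x t /andP[t0 t1]; case: ifP => tle.
    by rewrite HD //= /unitI; apply/andP; split; lra.
  rewrite HD //= /unitI; apply/andP; split; move/negbT: tle; rewrite -ltNge => ?; lra.
Qed.
End Dir1.
Lemma cvg_near_eq {T : Type} {V : topologicalType} (F : set_system T) {FF : Filter F}
  (f g : T -> V) (l : V) :
  (\forall x \near F, f x = g x) -> g @ F --> l -> f @ F --> l.
Proof.
move=> e gl N /gl; rewrite !nbhs_simpl /= => h.
by apply: filterS2 e h => x fg Ng /=; rewrite fg.
Qed.

Section Dir2.
Context (R : realType) (B X : topologicalType) (p : X -> B) (pcont : continuous p).
Local Notation Y := (fibprod p).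
Context (W : set Y) (Wopen : open W) (WD : range (fdiag p) `<=` W).
Context (G : Y -> R -> X)
  (Gc : {within W `*` unitI R, continuous (fun z : Y * R => G z.1 z.2)})
  (Gfib : forall w t, W w -> unitI R t -> p (G w t) = fibprod_proj p w)
  (G01 : forall w, W w -> G w 0 = (sval w).1 /\ G w 1 = (sval w).2)
  (GD : forall x t, unitI R t -> G (fdiag p x) t = x).
Context (u1 : Y -> R) (u1c : continuous u1) (u1D : forall x, u1 (fdiag p x) = 0)
  (u1W : forall z, ~ W z -> u1 z = 1) (u1r : forall z, 0 <= u1 z <= 1).
Context (phie : Y -> R) (phiec : continuous phie)
  (phie0 : forall z, phie z = 0 <-> range (fdiag p) z)
  (phier : forall z, 0 <= phie z <= 1).

Definition psi z := clamp (2 - 4 * u1 z).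
Definition phi z := (phie z + Num.min 1 (4 * u1 z)) / 2.

Lemma psi_cont : continuous psi.
Proof. exact (ccomp (ccomp u1c (@cont_affine R 2 4)) clamp_cont). Qed.

Lemma phi_cont : continuous phi.
Proof.
exact (contM (contD phiec (contMin (@contC Y R 1) (contM (@contC Y R 4) u1c))) (@contC Y R 2^-1)).
Qed.

Lemma phi_ge0 z : 0 <= phi z.
Proof.
rewrite /phi; have /andP[a b] := phier z; have /andP[c d] := u1r z.
apply: divr_ge0 => //; apply: addr_ge0 => //; rewrite le_min ler01 /=.
by apply: mulr_ge0.
Qed.

Lemma phi_le1 z : phi z <= 1.
Proof.
rewrite /phi; have /andP[a b] := phier z.
have : Num.min 1 (4 * u1 z) <= 1 by rewrite ge_min lexx.
move=> h; rewrite ler_pdivrMr //; lra.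
Qed.

Lemma phi0 z : phi z = 0 <-> range (fdiag p) z.
Proof.
split.
  move=> e; apply/phie0; have /andP[a b] := phier z.
  have : 0 <= Num.min 1 (4 * u1 z).
    by rewrite le_min ler01 /=; apply: mulr_ge0 => //; case/andP: (u1r z).
  move: e; rewrite /phi => e h; apply/eqP; rewrite eq_le a andbT.
  have : phie z + Num.min 1 (4 * u1 z) = 0.
    by move: e => /eqP; rewrite mulf_eq0 invr_eq0 pnatr_eq0 orbF => /eqP.
  lra.
move=> [x _ <-]; rewrite /phi u1D mulr0.
have -> : phie (fdiag p x) = 0 by apply/phie0; exists x.
by rewrite (min_idPr (@ler01 R)) addr0 mul0r.
Qed.

Lemma phi_small z : phi z <= 2^-1 -> psi z = 1.
Proof.
move=> h; have /andP[a b] := phier z; have /andP[c d] := u1r z.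
case: (leP (u1 z) 4^-1) => hu.
  rewrite /psi /clamp (min_idPl _); last lra.
  by rewrite (max_idPr (@ler01 R)).
exfalso; move: h; rewrite /phi (min_idPl _); last lra.
move=> h; have e : phie z = 0 by apply/eqP; rewrite eq_le a andbT; lra.
move/phie0: e => [x _ ex]; move: hu; rewrite -ex u1D; lra.
Qed.

Lemma psi_zero z : 2^-1 < u1 z -> psi z = 0.
Proof.
move=> h; rewrite /psi /clamp (min_idPr _); last lra.
by rewrite (max_idPl _) //; lra.
Qed.

Lemma psi_W z : psi z != 0 -> W z.
Proof.
move=> h; case: (pselect (W z)) => // nW; move: h; rewrite psi_zero ?eqxx //.
rewrite u1W //; lra.
Qed.

Definition Dv (z : Y) (s : R) : X * X :=
  if pselect (W z) then (G z (psi z * clamp s), (sval z).2) else sval z.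

Lemma Dv_mem z s : Dv z s \in fibprod_set p.
Proof.
rewrite /Dv; case: pselect => Wz; apply: mem_set; last exact: (set_mem (svalP z)).
rewrite /fibprod_set /= Gfib //; first exact: fib_eq.
by apply: unitI_mul; [exact: clamp_in | exact: clamp_in].
Qed.

Definition D (z : Y) (s : R) : Y := exist _ (Dv z s) (Dv_mem z s).

Lemma D0 z : D z 0 = z.
Proof.
apply: val_inj; rewrite /= /Dv; case: pselect => Wz //.
rewrite clamp_id; last by rewrite /unitI /= lexx ler01.
by rewrite mulr0 (G01 Wz).1 [RHS]surjective_pairing.
Qed.

Lemma DD x s : D (fdiag p x) s = fdiag p x.
Proof.
apply: val_inj; rewrite /= /Dv; case: pselect => Wz //.
rewrite GD //; apply: unitI_mul; exact: clamp_in.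
Qed.

Lemma D1 z s : psi z = 1 -> 1 <= s -> D z s = fdiag p (sval z).2.
Proof.
move=> ps s1; have Wz : W z by apply: psi_W; rewrite ps oner_neq0.
apply: val_inj; rewrite /= /Dv; case: pselect => // ?.
rewrite ps /clamp (min_idPl s1) (max_idPr (@ler01 R)) mulr1.
by rewrite (G01 Wz).2.
Qed.

Lemma Dfib z s : fibprod_proj p (D z s) = fibprod_proj p z.
Proof.
rewrite /fibprod_proj /= /Dv; case: pselect => Wz //=.
rewrite Gfib //; apply: unitI_mul; exact: clamp_in.
Qed.

Lemma Dclamp z s : D z (clamp s) = D z s.
Proof. by apply: val_inj; rewrite /= /Dv (clamp_id (clamp_in s)). Qed.

Lemma Dcont : continuous (fun x : Y * R => D x.1 x.2).
Proof.
apply: cont_into_sub => -[z0 s0] /=.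
case: (pselect (W z0)) => Wz0.
  have eW : \forall x \near (z0, s0), W x.1.
    apply: (fst_cont (x := (z0, s0))); exact: open_nbhs_nbhs.
  apply: (@cvg_near_eq _ _ _ _ _ (fun x : Y * R =>
      (G x.1 (psi x.1 * clamp x.2), (sval x.1).2))).
    by apply: filterS eW => x Wx; rewrite /Dv; case: pselect.
  rewrite /Dv; case: pselect => // ?.
  apply: cvg_pair_pt.
    apply: (@cvg_within_comp _ _ _ _ _ (W `*` unitI R)
      (fun x : Y * R => (x.1, psi x.1 * clamp x.2)) (fun x => G x.1 x.2)
      (z0, psi z0 * clamp s0)).
    - exact (cpair (x := (z0, s0)) fst_cont (contM (ccomp fst_cont psi_cont) (ccomp snd_cont clamp_cont))).
    - apply: filterS eW => x Wx; split => //=; apply: unitI_mul; exact: clamp_in.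
    - move/subspace_continuousP: Gc; apply; split => //=; apply: unitI_mul; exact: clamp_in.
  exact (ccomp (x := (z0, s0)) (ccomp fst_cont (@sval_cont _ (fibprod_set p))) snd_cont).
have u1z : u1 z0 = 1 by exact: u1W.
have eU : \forall x \near (z0, s0), 2^-1 < u1 x.1.
  apply: (cvgr_gt _ (ccomp (x := (z0, s0)) fst_cont u1c)) => /=; rewrite u1z; lra.
apply: (@cvg_near_eq _ _ _ _ _ (fun x : Y * R => sval x.1)).
  apply: filterS eU => x hx; rewrite /Dv; case: pselect => Wx //.
  by rewrite psi_zero // mul0r (G01 Wx).1 [RHS]surjective_pairing.
rewrite /Dv; case: pselect => // ?.
exact (ccomp (x := (z0, s0)) fst_cont (@sval_cont _ (fibprod_set p))).
Qed.

Section HEPc.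
Context (E : topologicalType) (pE : E -> B) (f : Y -> E) (h : X -> R -> E)
  (fc : continuous f) (ffib : forall y, pE (f y) = fibprod_proj p y)
  (hc : {within [set: X] `*` unitI R, continuous (fun z : X * R => h z.1 z.2)})
  (hfib : forall a t, unitI R t -> pE (h a t) = p a)
  (h0 : forall a, h a 0 = f (fdiag p a)).

Definition Hf (y : Y) (t : R) : E :=
  if t <= 2 * phi y then f (D y (t / (2 * phi y))) else h (sval y).2 (t - 2 * phi y).

Lemma Hf0 y : Hf y 0 = f y.
Proof.
rewrite /Hf ifT; first by rewrite mul0r D0.
by apply: mulr_ge0 => //; exact: phi_ge0.
Qed.

Lemma HfD a t : unitI R t -> Hf (fdiag p a) t = h a t.
Proof.
move=> /andP[t0 t1]; have ph : phi (fdiag p a) = 0 by apply/phi0; exists a.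
rewrite /Hf ph mulr0 subr0; case: ifP => // tle.
have -> : t = 0 by apply/eqP; rewrite eq_le tle t0.
by rewrite mul0r D0 h0.
Qed.

Lemma Hffib y t : unitI R t -> pE (Hf y t) = fibprod_proj p y.
Proof.
move=> /andP[t0 t1]; rewrite /Hf; case: ifP => tle.
  by rewrite ffib Dfib.
rewrite hfib; first by rewrite /fibprod_proj fib_eq.
have := phi_ge0 y; move/negbT: tle; rewrite -ltNge => tle ph.
by apply/andP; split; lra.
Qed.

Lemma Hfc : {within [set: Y] `*` unitI R, continuous (fun z : Y * R => Hf z.1 z.2)}.
Proof.
apply/subspace_continuousP => -[y0 t0] [_ /= /andP[t00 t01]].
set YI := _ `*` _.
set F := within YI (nbhs (y0, t0)).
have FF : Filter F by exact: within_filter.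
set P := [set x : Y * R | x.2 <= 2 * phi x.1].
set b1 := fun x : Y * R => f (D x.1 (x.2 / (2 * phi x.1))).
set b2 := fun x : Y * R => h (sval x.1).2 (x.2 - 2 * phi x.1).
have e1 : forall x, P x -> (fun z : Y * R => Hf z.1 z.2) x = b1 x.
  by move=> x Px; rewrite /= /Hf ifT.
have e2 : forall x, ~ P x -> (fun z : Y * R => Hf z.1 z.2) x = b2 x.
  by move=> x /negP/negbTE Px; rewrite /= /Hf ifF.
have cd : continuous (fun x : Y * R => x.2 - 2 * phi x.1).
  exact (contB snd_cont (contM (@contC _ R 2) (ccomp fst_cont phi_cont))).
have cdF : (fun x : Y * R => x.2 - 2 * phi x.1) @ F --> t0 - 2 * phi y0.
  exact: cvg_trans (cvg_app _ (cvg_within _)) (cd (y0, t0)).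
have EB1 : 2 * phi y0 < t0 -> forall l : E, b1 @ within P F --> l.
  move=> tgt l; apply: (@cvg_within_empty _ _ F FF).
  have := cvgr_gt _ cdF 0; rewrite subr_gt0 => /(_ FF tgt) hh.
  apply: (@filterS _ F FF _ _ _ hh) => x /= xl; rewrite /P /=; lra.
have EB2 : t0 < 2 * phi y0 -> forall l : E, b2 @ within (~` P) F --> l.
  move=> tlt l; apply: (@cvg_within_empty _ _ F FF).
  have := cvgr_lt _ cdF 0; rewrite subr_lt0 => /(_ FF tlt) hh.
  apply: (@filterS _ F FF _ _ _ hh) => x /= xl; rewrite /P /=; apply; lra.
have B2 : 2 * phi y0 <= t0 -> b2 @ within (~` P) F --> b2 (y0, t0).
  move=> tle; apply: (@cvg_within_comp _ _ _ _ _ ([set: X] `*` unitI R)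
      (fun x : Y * R => ((sval x.1).2, x.2 - 2 * phi x.1)) (fun x => h x.1 x.2)
      ((sval y0).2, t0 - 2 * phi y0)).
  - apply: cvg_trans (cvg_app _ (@cvg_within2 _ (nbhs (y0, t0)) _ YI (~` P))) _.
    exact (cpair (x := (y0, t0)) (ccomp (ccomp fst_cont (@sval_cont _ (fibprod_set p))) snd_cont) cd).
  - apply: within_withinW => -[z t] [_ /= /andP[u0 u1']] /negP; rewrite /P /= -ltNge => Pt.
    split => //; have := phi_ge0 z; rewrite /unitI /= => ?; apply/andP; split; lra.
  - move/subspace_continuousP: hc; apply; split => //=.
    by have := phi_ge0 y0; rewrite /unitI /= => ?; apply/andP; split; lra.
have B1a : 0 < phi y0 -> b1 @ within P F --> b1 (y0, t0).
  move=> ph; apply: cvg_trans (cvg_app _ (@cvg_within2 _ (nbhs (y0, t0)) _ YI P)) _.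
  have kc : (fun x : Y * R => (x.1, x.2 / (2 * phi x.1))) @ nbhs (y0, t0)
      --> (y0, t0 / (2 * phi y0)).
    apply: cvg_pair_pt; first exact: (fst_cont (x := (y0, t0))).
    apply: cvgM; first exact: (snd_cont (x := (y0, t0))).
    apply: cvgV; first by rewrite mulf_neq0 // ?pnatr_eq0 // gt_eqF.
    exact (contM (x := (y0, t0)) (@contC _ R 2) (ccomp fst_cont phi_cont)).
  exact: (cvg_comp_cont kc (ccomp Dcont fc)).
have B1b : phi y0 = 0 -> b1 @ within P F --> f y0.
  move=> ph0; have [x0 _ ey0] := (phi0 y0).1 ph0.
  have Dy0 : forall s, D y0 s = y0 by move=> s; rewrite -ey0 DD.
  move=> N nN.
  have cg : continuous (fun x : R * Y => f (D x.2 x.1)).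
    exact (ccomp (cpair snd_cont fst_cont) (ccomp Dcont fc)).
  have tube : \forall y \near y0, `[0, 1] `<=` (fun s => N (f (D y s))).
    apply: ((compact_near_coveringP _).1 (@segment_compact R 0 1) Y (nbhs y0)
      (fun y s => N (f (D y s)))).
    move=> s _; have := cg (s, y0); move=> /(_ N) /=; rewrite Dy0 => /(_ nN); exact.
  have := fst_cont (x := (y0, t0)) tube.
  move=> hh; suff : \forall x \near nbhs (y0, t0), YI x -> P x -> N (b1 x) by [].
  apply: (@filterS _ (nbhs (y0, t0)) _ _ _ _ hh) => x /= hx _ Px; rewrite /b1 -Dclamp; apply: hx.
  by have /andP[c0 c1] := clamp_in (x.2 / (2 * phi x.1)); rewrite /= in_itv /= c0 c1.
rewrite /from_subspace /=.
have -> : Hf y0 t0 = (if t0 <= 2 * phi y0 then b1 (y0, t0) else b2 (y0, t0)) by [].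
have [tlt|tgt|teq] := ltgtP t0 (2 * phi y0).
- have ph : 0 < phi y0 by lra.
  exact: (@cvg_paste _ _ F FF P _ b1 b2 _ e1 e2 (B1a ph) (EB2 tlt _)).
- exact: (@cvg_paste _ _ F FF P _ b1 b2 _ e1 e2 (EB1 tgt _) (B2 (ltW tgt))).
- have B2' : b2 @ within (~` P) F --> b2 (y0, t0) by apply: B2; rewrite teq.
  have [ph0|phpos] : phi y0 = 0 \/ 0 < phi y0.
    by have := phi_ge0 y0; rewrite le_eqVlt => /orP[/eqP ->|->]; [left|right].
  + have [x0 _ ey0] := (phi0 y0).1 ph0.
    have t0z : t0 = 0 by rewrite teq ph0 mulr0.
    have eb2 : b2 (y0, t0) = f y0 by rewrite /b2 /= t0z ph0 mulr0 subr0 -ey0 /= h0.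
    have eb1 : b1 (y0, t0) = f y0 by rewrite /b1 /= t0z mul0r D0.
    rewrite eb1.
    apply: (@cvg_paste _ _ F FF P _ b1 b2 _ e1 e2 (B1b ph0)).
    by rewrite -eb2.
  + have q1 : t0 / (2 * phi y0) = 1 by rewrite teq divff // mulf_neq0 // ?pnatr_eq0 // gt_eqF.
    have ps1 : psi y0 = 1 by apply: phi_small; lra.
    have eb1 : b1 (y0, t0) = f (fdiag p (sval y0).2) by rewrite /b1 /= q1 D1.
    have eb2 : b2 (y0, t0) = f (fdiag p (sval y0).2) by rewrite /b2 /= teq subrr h0.
    have := B1a phpos; rewrite eb1 => B1'.
    apply: (@cvg_paste _ _ F FF P _ b1 b2 _ e1 e2 B1').
    by rewrite -eb2.
Qed.
End HEPc.

Lemma ULC_HEP : fw_cofibration R p (fibprod_proj p) (fdiag p).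
Proof.
split; [exact: fdiag_cont | by [] | ].
move=> E pE pEc f h fc ffib hc hfib h0.
exists (Hf f h); split.
- by apply: Hfc.
- by move=> y t It; apply: Hffib.
- by move=> y; apply: Hf0.
- by move=> a t It; apply: HfD.
Qed.
End Dir2.


Unset Implicit Arguments.

Section ExactZero.
Context {T : topologicalType} {R : realType}.
Context (C : set T) (g : nat -> T -> R) (gc : forall i, continuous (g i))
  (gr : forall i z, 0 <= g i z <= 1) (gC : forall i z, C z -> g i z = 0)
  (gF : forall z, ~ C z -> exists i, g i z = 1).

Definition wt (n : nat) : R := (2^-1) ^+ n.
Definition Ssum (N : nat) (z : T) : R := \sum_(i < N) wt i.+1 * g i z.
Definition fz (z : T) : R := limn (fun N => Ssum N z).

Lemma wt_ge0 n : 0 <= wt n.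
Proof. by apply: exprn_ge0; rewrite invr_ge0 ler0n. Qed.

Lemma wtS n : wt n.+1 = 2^-1 * wt n.
Proof. by rewrite /wt exprS. Qed.

Lemma SsumS N z : Ssum N.+1 z = Ssum N z + wt N.+1 * g N z.
Proof. by rewrite /Ssum big_ord_recr. Qed.

Lemma Ssum0 z : Ssum 0 z = 0.
Proof. by rewrite /Ssum big_ord0. Qed.

Lemma Ssum_tail z N k : Ssum (N + k) z <= Ssum N z + wt N - wt (N + k).
Proof.
elim: k => [|k IH]; first by rewrite addn0; lra.
rewrite addnS SsumS; have /andP[a b] := gr (N + k) z.
have := wt_ge0 (N + k); rewrite wtS => w0.
have : wt (N + k).+1 * g (N + k) z <= wt (N + k).+1.
  by rewrite -[X in _ <= X]mulr1; apply: ler_wpM2l => //; exact: wt_ge0.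
rewrite wtS; lra.
Qed.

Lemma Ssum_nd z : nondecreasing_seq (fun N => Ssum N z).
Proof.
apply/nondecreasing_seqP => n; rewrite SsumS lerDl.
by apply: mulr_ge0; [exact: wt_ge0 | case/andP: (gr n z)].
Qed.

Lemma Ssum_le1 z N : Ssum N z <= 1.
Proof.
have := Ssum_tail z 0 N; rewrite add0n Ssum0 /wt expr0 => h.
have := wt_ge0 N; rewrite /wt; lra.
Qed.

Lemma Ssum_cvg z : cvgn (fun N => Ssum N z).
Proof.
apply: nondecreasing_is_cvgn; first exact: Ssum_nd.
by exists 1 => _ [n _ <-]; exact: Ssum_le1.
Qed.

Lemma fz_ge z N : Ssum N z <= fz z.
Proof. exact (nondecreasing_cvgn_le (Ssum_nd z) (Ssum_cvg z) N). Qed.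

Lemma fz_le z N : fz z <= Ssum N z + wt N.
Proof.
apply: limr_le; first exact: Ssum_cvg.
exists N => // n /= Nn; have := Ssum_tail z N (n - N); rewrite subnKC //.
have := wt_ge0 n; lra.
Qed.

Lemma fz0 z : fz z = 0 <-> C z.
Proof.
split; last first.
  move=> Cz; rewrite /fz.
  have -> : (fun N => Ssum N z) = (fun=> 0).
    by apply: funext => N; rewrite /Ssum big1 // => i _; rewrite gC // mulr0.
  exact: lim_cst.
move=> f0; apply: contrapT => nC; have [i gi] := gF z nC.
have := fz_ge z i.+1; rewrite SsumS gi mulr1 f0.
have := wt_ge0 i.+1; have := Ssum_nd z 0%N i (leq0n i); rewrite Ssum0.
have : 0 < wt i.+1 by apply: exprn_gt0; rewrite invr_gt0 ltr0n.
lra.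
Qed.

Lemma fz_range z : 0 <= fz z <= 1.
Proof.
apply/andP; split; first by have := fz_ge z 0; rewrite Ssum0.
by have := fz_le z 0; rewrite Ssum0 /wt expr0 add0r.
Qed.

Lemma Ssum_cont N : continuous (Ssum N).
Proof.
elim: N => [|N IH].
  have -> : Ssum 0 = fun=> 0 by apply: funext => z; rewrite Ssum0.
  exact: contC.
have -> : Ssum N.+1 = fun z => Ssum N z + wt N.+1 * g N z.
  by apply: funext => z; rewrite SsumS.
exact: (contD IH (contM (@contC _ R (wt N.+1)) (gc N))).
Qed.

Lemma fz_cont : continuous fz.
Proof.
move=> z0; apply/cvgrPdist_lt => e e0.
have e3 : 0 < e / 3 by rewrite divr_gt0.
have [N _ hN] : \forall n \near \oo, wt n < e / 3.
  apply: (cvgr_lt _ (@cvg_expr R 2^-1 _)) => //.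
  by rewrite ger0_norm ?invr_ge0 ?ler0n // invf_lt1 // ltr1n.
have wN := hN N (leqnn N).
have := (Ssum_cont N z0); move/cvgrPdist_lt/(_ (e / 3) e3).
apply: filterS => t ht.
have := fz_ge z0 N; have := fz_le z0 N; have := fz_ge t N; have := fz_le t N.
move: ht; rewrite !ltr_norml => /andP[h1 h2].
move=> *; apply/andP; split; lra.
Qed.

End ExactZero.

Set Implicit Arguments.

Lemma exact_zero (T : topologicalType) (R : realType) (C : set T) :
  normal_space T -> closed C -> Gdelta C ->
  exists f : T -> R, [/\ continuous f, (forall z, f z = 0 <-> C z) &
    (forall z, 0 <= f z <= 1)].
Proof.
move=> nT cC [F Fo CF].
have CFi : forall i z, C z -> F i z by move=> i z; rewrite CF; apply.
have : forall i, exists gi : T -> R, [/\ continuous gi, gi @` C `<=` [set 0],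
    gi @` (~` F i) `<=` [set 1] & range gi `<=` `[0, 1]].
  move=> i; apply: (urysohn_ext_itv nT cC (open_closedC (Fo i)) _ (@ltr01 R)).
  by apply/seteqP; split => // z [Cz nFz]; apply: nFz; exact: CFi.
move=> /choice [g hg].
have gr : forall i z, 0 <= g i z <= 1.
  move=> i z; have [_ _ _ rg] := hg i.
  by have := rg (g i z) (ex_intro2 _ _ z I erefl); rewrite /= in_itv.
have gC : forall i z, C z -> g i z = 0.
  by move=> i z Cz; have [_ hC _ _] := hg i; exact: (hC _ (ex_intro2 _ _ z Cz erefl)).
have gF : forall z, ~ C z -> exists i, g i z = 1.
  move=> z nC; have [i nF] : exists i, ~ F i z.
    apply: contrapT => hn; apply: nC; rewrite CF => i _.
    by apply: contrapT => nFi; apply: hn; exists i.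
  by exists i; have [_ _ hF _] := hg i; exact: (hF _ (ex_intro2 _ _ z nF erefl)).
exists (fz g); split.
- by apply: fz_cont => i; case: (hg i).
- by move=> z; apply: fz0.
- by move=> z; apply: fz_range.
Qed.

Theorem theorem4p4 (R : realType) (B X : topologicalType) (p : X -> B) :
  continuous p ->
  fw_hausdorff p ->
  perfectly_normal (fibprod p) ->
  (fw_LEC R p <-> fw_ULC R p).
Proof.
move=> pc hd [nY gY]; split; first exact: LEC_ULC.
move=> [W [Wo WD [G [Gc Gfib G01 GD]]]].
have [u1 [u1c u1D u1W u1r]] : exists u1 : fibprod p -> R, [/\ continuous u1,
    u1 @` range (fdiag p) `<=` [set 0], u1 @` (~` W) `<=` [set 1] &
    range u1 `<=` `[0, 1]].
  apply: (urysohn_ext_itv nY hd (open_closedC Wo) _ (@ltr01 R)).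
  by apply/seteqP; split => // z [Dz nWz]; apply: nWz; exact: WD.
have [phie [phiec phie0 phier]] := exact_zero R nY hd (gY _ hd).
split.
  apply: (ULC_HEP Wo Gc Gfib G01 GD u1c _ _ _ phiec phie0 phier).
  - by move=> x; apply: u1D; exists (fdiag p x) => //; exists x.
  - by move=> z nW; apply: u1W; exists z.
  - by move=> z; have := u1r (u1 z) (ex_intro2 _ _ z I erefl); rewrite /= in_itv.
split; [exact: fdiag_cont | exact: hd | ].
exists (fun z : fibprod p => (sval z).1); split => //.
apply: continuous_subspaceT.
exact (ccomp (@sval_cont _ (fibprod_set p)) fst_cont).
Qed.
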